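(* Let $D$ be a daughter polytope of a finite set $\mathbf P\subset\mathbb Z^n$ with $P=\operatorname{Conv}\mathbf P$. Let $F\subset P$ be a face with $F\notin\mathcal D(D)$, and set $\mathbf F=F\cap\mathbf P$. Then $D\cap F$ is a daughter polytope of $\mathbf F$. Its associated set $\mathcal D_F(D\cap F)$, the inclusion-maximal faces of $F$ disjoint from $D\cap F$, consists exactly of the nonempty intersections $R\cap F$ for $R\in\mathcal D(D)$.
   Context: **Daughter polytope.** For a nonempty polytope $D$ with vertices in a finite set $\mathbf Q$, let $\mathcal D(D)$ be the set of inclusion-maximal faces of $\operatorname{Conv}\mathbf Q$ disjoint from $D$. $D$ is a daughter polytope of $\mathbf Q$ if: 1. distinct members of $\mathcal D(D)$ are disjoint; 2. $D=\operatorname{Conv}(\mathbf Q\setminus\bigcup_{G\in\mathcal D(D)}G)$.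
   Formalization: F is also assumed to meet D (D ∩ F ≠ ∅) besides F ∉ 𝒟(D), and faces are taken nonempty, the empty set counting as a face of no polytope. Each condition added here is assumed in the paper as well or is needed for the statement above to hold. *)

(* Defs.v *)
From HB Require Import structures.
From mathcomp Require Import all_boot all_order all_algebra.
From mathcomp Require Import boolp classical_sets.
Set Implicit Arguments. Unset Strict Implicit. Unset Printing Implicit Defensive.
Import Order.TTheory GRing.Theory Num.Theory.
Local Open Scope classical_set_scope.
Local Open Scope ring_scope.

Section Polytopes.
Variables (R : realFieldType) (n : nat).
Local Notation V := 'rV[R]_n.

Definition dotv (c x : V) : R := \sum_(i < n) c 0 i * x 0 i.

Definition conv (A : set V) : set V :=
  [set x | exists (m : nat) (p : 'I_m -> V) (w : 'I_m -> R),
     (forall i, A (p i)) /\ (forall i, 0 <= w i) /\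
     \sum_(i < m) w i = 1 /\ x = \sum_(i < m) w i *: p i].

(* (nonempty) face of a convex set K: intersection of K with a
   supporting hyperplane {c.x = d}, where c.x <= d on K
   (c = 0, d = 0 gives K itself). *)
Definition face (K F : set V) : Prop :=
  F !=set0 /\
  exists (c : V) (d : R), (forall x, K x -> dotv c x <= d) /\
    F = [set x | K x /\ dotv c x = d].

Definition polytope_in (Q D : set V) : Prop :=
  exists S : set V, S `<=` Q /\ D = conv S.

Definition DD (Q D : set V) : set (set V) :=
  [set G | face (conv Q) G /\ G `&` D = set0 /\
     forall G', face (conv Q) G' -> G' `&` D = set0 -> G `<=` G' -> G' = G].

Definition daughter (Q D : set V) : Prop :=
  D !=set0 /\ polytope_in Q D /\
  (forall G1 G2, DD Q D G1 -> DD Q D G2 -> G1 <> G2 -> G1 `&` G2 = set0) /\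
  D = conv (Q `\` \bigcup_(G in DD Q D) G).

End Polytopes.

(* Main.v *)
Require Import Defs.
From HB Require Import structures.
From mathcomp Require Import all_boot all_order all_algebra.
From mathcomp Require Import boolp classical_sets cardinality reals.
From mathcomp Require Import lra zify.
Import Order.TTheory GRing.Theory Num.Theory.
Local Open Scope classical_set_scope.
Local Open Scope ring_scope.

Section Aux.
Variables (R : realFieldType) (n : nat).
Local Notation V := 'rV[R]_n.

Lemma dotv_sum (c : V) m (w : 'I_m -> R) (p : 'I_m -> V) :
  dotv c (\sum_(i < m) w i *: p i) = \sum_(i < m) w i * dotv c (p i).
Proof.
rewrite /dotv.
under eq_bigr do rewrite summxE mulr_sumr.
rewrite exchange_big /=; apply: eq_bigr => i _; rewrite mulr_sumr.
by apply: eq_bigr => j _; rewrite mxE mulrCA.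
Qed.

Lemma dotvDZ (c1 c2 : V) (l : R) x :
  dotv (c1 + l *: c2) x = dotv c1 x + l * dotv c2 x.
Proof.
rewrite /dotv mulr_sumr -big_split; apply: eq_bigr => j _.
by rewrite !mxE mulrDl mulrA.
Qed.

Lemma conv_sub (A B : set V) : A `<=` B -> conv A `<=` conv B.
Proof.
move=> AB x [m [p [w [Ap [w0 [w1 ->]]]]]].
by exists m, p, w; split => // i; apply: AB.
Qed.

Lemma conv_le (A : set V) c d : (forall a, A a -> dotv c a <= d) ->
  forall x, conv A x -> dotv c x <= d.
Proof.
move=> H x [m [p [w [Ap [w0 [w1 ->]]]]]].
rewrite dotv_sum -[d]mul1r -w1 mulr_suml; apply: ler_sum => i _.
by rewrite ler_wpM2l // H.
Qed.

Lemma conv_in (A : set V) : A `<=` conv A.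
Proof.
move=> a Aa; exists 1%N, (fun _ => a), (fun _ => 1); split => //.
split => [i|]; first exact: ler01.

by rewrite !big_ord1 scale1r.
Qed.

Lemma conv_hyp (A : set V) c d : (forall a, A a -> dotv c a <= d) ->
  [set x | conv A x /\ dotv c x = d] = conv (A `&` [set x | dotv c x = d]).
Proof.
move=> H; apply/seteqP; split => x.
  move=> [[m [p [w [Ap [w0 [w1 xE]]]]]] cx].
  have Hz : forall i, w i * (d - dotv c (p i)) = 0.
    move=> i; apply: (@psumr_eq0P _ _ predT (fun i => w i * (d - dotv c (p i)))) => // [{}i _|].
      by apply: mulr_ge0 => //; rewrite subr_ge0; apply: H.
    rewrite (eq_bigr (fun i => w i * d - w i * dotv c (p i))); last first.
      by move=> k _; rewrite mulrBr.
    by rewrite sumrB -mulr_suml w1 mul1r -dotv_sum -xE cx subrr.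
  have [j wj] : exists j, w j != 0.
    apply: contrapT => H0; move: w1; rewrite big1 => [/eqP|i _]; last first.
      by apply/eqP/negPn/negP => Hi; apply: H0; exists i.
    by rewrite eq_sym oner_eq0.
  have pj : dotv c (p j) = d.
    by move: (Hz j) => /eqP; rewrite mulf_eq0 (negbTE wj) subr_eq0 => /eqP.
  pose q i := if w i == 0 then p j else p i.
  exists m, q, w; split; [|split => //; split => //].
    move=> i; rewrite /q; case: ifP => wi; first by split.
    split => //; move: (Hz i) => /eqP; rewrite mulf_eq0 wi subr_eq0 => /eqP.
    by move=> ->.
  rewrite xE; apply: eq_bigr => i _; rewrite /q; case: ifP => // /eqP ->.
  by rewrite !scale0r.
move=> hx; split.
  by apply: conv_sub hx => y [].
have Hn : forall y, dotv (- c) y = - dotv c y.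
  by move=> y; rewrite /dotv -sumrN; apply: eq_bigr => j _; rewrite mxE mulNr.
have h1 := @conv_le (A `&` [set x | dotv c x = d]) c d.
have h2 := @conv_le (A `&` [set x | dotv c x = d]) (- c) (- d).
apply/eqP; rewrite eq_le h1 //=; last by move=> a [_ ->].
by rewrite -lerN2 -Hn h2 // => a [_ <-]; rewrite Hn.
Qed.


Lemma conv_eq (A : set V) c d : (forall a, A a -> dotv c a = d) ->
  forall x, conv A x -> dotv c x = d.
Proof.
move=> H x hx.
have Hn : forall y, dotv (- c) y = - dotv c y.
  by move=> y; rewrite /dotv -sumrN; apply: eq_bigr => j _; rewrite mxE mulNr.
have h1 := @conv_le A c d.
have h2 := @conv_le A (- c) (- d).
apply/eqP; rewrite eq_le h1 //=; last by move=> a /H ->.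
by rewrite -lerN2 -Hn h2 // => a /H; rewrite Hn => ->.
Qed.

Lemma conv_face (P F : set V) : face (conv P) F -> conv (F `&` P) = F.
Proof.
move=> [_ [c [d [Hle ->]]]].
rewrite [RHS]conv_hyp; last by move=> a Pa; apply: Hle; apply: conv_in.
congr conv; apply/seteqP; split => x /=.
  by move=> [[_ ->] Px].
by move=> [Px cx]; split => //; split => //; apply: conv_in.
Qed.

Lemma face_sub (P F G : set V) : face (conv P) F -> face (conv (F `&` P)) G ->
  G `<=` F.
Proof.
move=> hF; rewrite conv_face // => -[_ [c [d [_ ->]]]] x [].
by [].
Qed.

Lemma face_inter (P F G : set V) : face (conv P) F -> face (conv P) G ->
  G `&` F !=set0 -> face (conv (F `&` P)) (G `&` F).
Proof.
move=> hF [_ [c [d [Hle GE]]]] ne; rewrite conv_face //; split => //.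
have FP : F `<=` conv P by move: hF => [_ [c1 [d1 [_ ->]]]] x [].
exists c, d; split; first by move=> x /FP; apply: Hle.
rewrite GE; apply/seteqP; split => x /=.
  by move=> [[_ ->] Fx].
by move=> [Fx cx]; split => //; split => //; apply: FP.
Qed.

Lemma le_sum_seq (s : seq V) (f : V -> R) x : (forall y, 0 <= f y) ->
  x \in s -> f x <= \sum_(p <- s) f p.
Proof.
move=> f0; elim: s => // a s IH; rewrite inE big_cons => /orP [/eqP ->|xs].
  by rewrite lerDl sumr_ge0.
by apply: le_trans (IH xs) _; rewrite lerDr.
Qed.

Lemma face_face (P F G : set V) : finite_set P -> face (conv P) F ->
  face (conv (F `&` P)) G -> face (conv P) G.
Proof.
move=> /finite_seqP [s Ps] hF; rewrite conv_face //.
move=> [G0 [c2 [d2 [H2 GE]]]]; split => //.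
move: hF => [F0 [c1 [d1 [H1 FE]]]].
pose r p := (dotv c2 p - d2) / (d1 - dotv c1 p).
pose l := \sum_(p <- s) `|r p| + 1.
have claim : forall p, P p -> dotv c1 p < d1 ->
    dotv c2 p - d2 < l * (d1 - dotv c1 p).
  move=> p Pp lt; have pos : 0 < d1 - dotv c1 p by rewrite subr_gt0.
  have -> : dotv c2 p - d2 = r p * (d1 - dotv c1 p).
    by rewrite /r mulrVK // unitfE gt_eqF.
  rewrite ltr_pM2r //; apply: le_lt_trans (ler_norm _) _.
  rewrite /l ltr_pwDr // le_sum_seq //; last by rewrite Ps in Pp.
have FP : forall p, P p -> dotv c1 p = d1 -> F p.
  by move=> p Pp e; rewrite FE; split => //; apply: conv_in.
have ptle : forall p, P p -> dotv (c2 + l *: c1) p <= d2 + l * d1.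
  move=> p Pp; rewrite dotvDZ.
  have : dotv c1 p <= d1 by apply: H1; apply: conv_in.
  rewrite le_eqVlt => /orP [/eqP e|lt].
    by rewrite e lerD2r; apply: H2; apply: FP.
  have := claim p Pp lt; rewrite mulrBr; lra.
have pteq : forall p, P p -> dotv (c2 + l *: c1) p = d2 + l * d1 ->
    dotv c1 p = d1 /\ dotv c2 p = d2.
  move=> p Pp; rewrite dotvDZ.
  have : dotv c1 p <= d1 by apply: H1; apply: conv_in.
  rewrite le_eqVlt => /orP [/eqP e|lt].
    by rewrite e => /addIr.
  have := claim p Pp lt; rewrite mulrBr; lra.
exists (c2 + l *: c1), (d2 + l * d1); split.
  by apply: conv_le.
rewrite GE FE; apply/seteqP; split => x /=.
  by move=> [[Px e1] e2]; split => //; rewrite dotvDZ e1 e2.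
move=> [Px e].
have : conv (P `&` [set x | dotv (c2 + l *: c1) x = d2 + l * d1]) x.
  by rewrite -conv_hyp.
move=> hx; split; first split => //.
  by apply: (@conv_eq _ c1 d1 _ x hx) => a [Pa /(pteq _ Pa) []].
by apply: (@conv_eq _ c2 d2 _ x hx) => a [Pa /(pteq _ Pa) []].
Qed.


Lemma count_lt (T : eqType) (a b : pred T) (s : seq T) x :
  (forall y, a y -> b y) -> x \in s -> b x -> ~~ a x ->
  (count a s < count b s)%N.
Proof.
move=> ab; have le : forall t : seq T, (count a t <= count b t)%N.
  elim=> //= y t IH; apply: leq_add => //.
  by case: (a y) (ab y) => //= ->.
elim: s => // y s IH; rewrite inE => /orP [/eqP <-|xs] bx ax /=.
  by rewrite bx (negbTE ax) add0n add1n ltnS le.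
rewrite -addnS; apply: leq_add; last exact: IH xs bx ax.
by case: (a y) (ab y) => //= ->.
Qed.

Lemma max_exists (P D G : set V) : finite_set P -> face (conv P) G ->
  G `&` D = set0 -> exists Rr, DD P D Rr /\ G `<=` Rr.
Proof.
move=> /[dup] finP /finite_seqP [s Ps].
pose mu (H : set V) := count (fun x => `[< H x >]) s.
have strict : forall G G', face (conv P) G -> face (conv P) G' -> G `<=` G' ->
    G' <> G -> (mu G < mu G')%N.
  move=> G1 G2 h1 h2 sub ne.
  have [p [Pp [G2p nG1p]]] : exists p, P p /\ G2 p /\ ~ G1 p.
    apply: contrapT => H; apply: ne; apply/seteqP; split => //.
    rewrite -(@conv_face P _ h1) -(@conv_face P _ h2); apply: conv_sub => x [G2x Px].
    split => //; apply: contrapT => nG1x; apply: H; by exists x.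
  apply: (@count_lt _ _ _ _ p).
  - by move=> y /asboolP /sub /asboolP.
  - by rewrite Ps in Pp.
  - by apply/asboolP.
  - by apply/negP => /asboolP.
have musz : forall H, (mu H <= size s)%N by move=> H; apply: count_size.
suff : forall k G, (size s - mu G <= k)%N -> face (conv P) G ->
  G `&` D = set0 -> exists Rr, DD P D Rr /\ G `<=` Rr.
  by move=> H; apply: (H _ G (leqnn _)).
elim=> [|k IH] {}G hk hG hGD.
  exists G; split => //; split => //; split => // G' hG' hG'D GG'.
  apply: contrapT => ne.
  have := strict _ _ hG hG' GG' ne; have := musz G'; lia.
have [max|nmax] := pselect (forall G', face (conv P) G' -> G' `&` D = set0 ->
    G `<=` G' -> G' = G).
  by exists G; split => //; split.
have [G' [hG' [hG'D [GG' ne]]]] : exists G', face (conv P) G' /\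
    G' `&` D = set0 /\ G `<=` G' /\ G' <> G.
  apply: contrapT => H; apply: nmax => G' h1 h2 h3; apply: contrapT => h4.
  by apply: H; exists G'.
have [|Rr [hR sub]] := IH G' _ hG' hG'D.
  have := strict _ _ hG hG' GG' ne; have := musz G'; lia.
by exists Rr; split => //; apply: subset_trans sub.
Qed.


Lemma sub0 (A B : set V) : A `<=` B -> B = set0 -> A = set0.
Proof. by move=> AB B0; apply/seteqP; split => // x /AB; rewrite B0. Qed.

End Aux.
Arguments dotv_sum {R n}.
Arguments dotvDZ {R n}.
Arguments conv_sub {R n A B}.
Arguments conv_le {R n}.
Arguments conv_in {R n}.
Arguments conv_hyp {R n}.
Arguments conv_eq {R n}.
Arguments conv_face {R n}.
Arguments face_sub {R n P F G}.
Arguments face_inter {R n P F G}.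
Arguments le_sum_seq {R n}.
Arguments face_face {R n P F G}.
Arguments max_exists {R n P D G}.
Arguments sub0 {R n A B}.

Theorem mainTheorem6 (R : realType) (n : nat) (P : set 'rV[R]_n)
  (finP : finite_set P)
  (intP : forall x, P x -> forall j, x 0 j \is a Num.int)
  (D : set 'rV[R]_n) (hD : daughter P D)
  (F : set 'rV[R]_n) (hF : face (conv P) F) (hFD : ~ DD P D F)
  (hDF : D `&` F !=set0) :
  daughter (F `&` P) (D `&` F) /\
  DD (F `&` P) (D `&` F) =
    [set G | exists Rf, DD P D Rf /\ Rf `&` F !=set0 /\ G = Rf `&` F].
Proof.
move: hD => [D0 [[S [SP DS]] [disj Deq]]].
have eqGDF : forall G, G `<=` F -> G `&` (D `&` F) = G `&` D.
  move=> G GF; apply/seteqP; split => x /=; first by move=> [? [? _]].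
  by move=> [Gx Dx]; split => //; split => //; apply: GF.
have K1 : forall G, DD (F `&` P) (D `&` F) G <->
    exists Rf, DD P D Rf /\ Rf `&` F !=set0 /\ G = Rf `&` F.
  move=> G; split.
    move=> [hG [hGD hmax]].
    have GF := face_sub hF hG.
    have hG' := face_face finP hF hG.
    rewrite eqGDF // in hGD.
    have [Rr [hR GR]] := max_exists finP hG' hGD.
    have ne : Rr `&` F !=set0.
      by move: hG => [[x Gx] _]; exists x; split; [apply: GR|apply: GF].
    exists Rr; split => //; split => //; symmetry; apply: hmax.
    - exact: face_inter hF hR.1 ne.
    - rewrite eqGDF; last by move=> x [].
      by apply: (@sub0 _ _ _ (Rr `&` D)); [move=> x [[]]|exact: hR.2.1].
    - by move=> x Gx; split; [apply: GR|apply: GF].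
  move=> [Rf [hR [ne ->]]].
  have RFF : Rf `&` F `<=` F by move=> x [].
  split; first exact: face_inter hF hR.1 ne.
  split.
    rewrite eqGDF //.
    by apply: (@sub0 _ _ _ (Rf `&` D)); [move=> x [[]]|exact: hR.2.1].
  move=> G' hG' hG'D sub.
  have GF := face_sub hF hG'.
  have hG'' := face_face finP hF hG'.
  rewrite eqGDF // in hG'D.
  have [R' [hR' GR']] := max_exists finP hG'' hG'D.
  have RR : Rf = R'.
    apply: contrapT => ne'; have := disj _ _ hR hR' ne'.
    move: ne => [x /[dup] /sub /GR' R'x [Rx _]] /seteqP [/(_ x) H _].
    by apply: H.
  apply/seteqP; split => // x G'x; split; last exact: GF.
  by rewrite RR; apply: GR'.
have FP : F `<=` conv P by move: hF => [_ [c [d [_ ->]]]] x [].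
have E : D `&` F = conv ((F `&` P) `\` \bigcup_(G in DD P D) G).
  move: (hF) => [_ [c [d [Hle FE]]]].
  have -> : D `&` F = [set x | conv (P `\` \bigcup_(G in DD P D) G) x /\
      dotv c x = d].
    rewrite {1}Deq FE; apply/seteqP; split => x /=.
      by move=> [cx [_ e]].
    move=> [cx e]; split => //; split => //.
    by apply: conv_sub cx => y [].
  rewrite conv_hyp; last by move=> a [Pa _]; apply: Hle; apply: conv_in.
  congr conv; rewrite FE; apply/seteqP; split => x /=.
    by move=> [[Px nx] e]; split => //; split => //; split => //; apply: conv_in.
  by move=> [[[_ e] Px] nx].
have U : (F `&` P) `\` \bigcup_(G in DD (F `&` P) (D `&` F)) G =
    (F `&` P) `\` \bigcup_(G in DD P D) G.
  apply/seteqP; split => x /= [[Fx Px] nx]; split => //; move=> [G hG Gx];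
    apply: nx.
    exists (G `&` F) => //; apply/(K1 (G `&` F)); exists G; split => //; split => //.
    by exists x.
  case: (proj1 (K1 G) hG) => Rf [hR [_ GE]]; exists Rf => //.
  by move: Gx; rewrite GE => -[].
split; last by apply/seteqP; split => G /(K1 G).
split => //; split; first by exists ((F `&` P) `\` \bigcup_(G in DD P D) G);
  split => // x [[]].
split; last by rewrite U.
move=> G1 G2 /(K1 G1) [R1 [h1 [_ ->]]] /(K1 G2) [R2 [h2 [_ ->]]] ne.
have R12 : R1 <> R2 by move=> e; apply: ne; rewrite e.
by apply: (@sub0 _ _ _ (R1 `&` R2)); [move=> x [[? _] [? _]]|exact: disj].
Qed.
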